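(* Let $n\ge 3$ and let $\Gamma=\mathrm{W}(2^n,2)$, with vertex-set $\mathbb{Z}_{2^n}\times\mathbb{Z}_2$ where $(i,u)$ is adjacent to $(j,v)$ iff $i-j\in\{-1,1\}$. Let $\sigma$ and $\tau$ be the permutations of $\mathbb{Z}_{2^n}$ given by $\sigma=(1\,3\,5\,\ldots\,2^n-1)(0\,2\,4\,\ldots\,2^n-2)$ (i.e. $i\mapsto i+2$) and $\tau\colon i\mapsto -i+4$, acting on $\mathrm{V}(\Gamma)$ via the first coordinate (these are automorphisms of $\Gamma$). For $i\in\mathbb{Z}_{2^n}$, let $\alpha_i$ be the automorphism of $\Gamma$ interchanging $(i,0)$ and $(i,1)$ and fixing all other vertices. Let $x=\alpha_1\sigma$ and let $z$ be the product of all $\alpha_i$ with $i\not\equiv 1\pmod 4$, i.e. $z=\alpha_0\alpha_2\alpha_3\cdots\alpha_{2^n-4}\alpha_{2^n-2}\alpha_{2^n-1}$. Let $G=\langle x,\tau,z\rangle$. Then $G$ is a group of automorphisms of $\Gamma$ of order $2^{n+2}$ acting regularly on $\mathrm{E}(\Gamma)$, and every involution of $G$ fixes a vertex of $\Gamma$.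
   Context: Graphs are finite and simple. A group acts regularly on a set if it acts transitively with trivial point stabilisers. *)

(* Defs.v *)
From HB Require Import structures.
From mathcomp Require Import all_boot all_order all_algebra all_fingroup.
Set Implicit Arguments. Unset Strict Implicit. Unset Printing Implicit Defensive.
Import GRing.Theory.

Definition vert (n : nat) : finType := ('Z_(2 ^ n) * bool)%type.

Definition adj (n : nat) (a b : vert n) : bool :=
  ((a.1 - b.1)%R == 1%R) || ((b.1 - a.1)%R == 1%R).

Definition edges (n : nat) : {set {set vert n}} :=
  [set e | [exists a : vert n, exists b : vert n, adj a b && (e == [set a; b])]].

Definition is_aut (n : nat) (g : {perm vert n}) : Prop :=
  forall a b : vert n, adj (g a) (g b) = adj a b.

Definition sigma_fun (n : nat) (v : vert n) : vert n := ((v.1 + 2%:R)%R, v.2).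
Lemma sigma_inj n : injective (@sigma_fun n).
Proof.
apply: (@can_inj _ _ _ (fun v : vert n => ((v.1 - 2%:R)%R, v.2))).
by move=> [i u]; rewrite /sigma_fun; congr pair; rewrite addrK.
Qed.
Definition sigma (n : nat) : {perm vert n} := perm (@sigma_inj n).

Definition tau_fun (n : nat) (v : vert n) : vert n := ((- v.1 + 4%:R)%R, v.2).
Lemma tau_inj n : injective (@tau_fun n).
Proof.
apply: (@can_inj _ _ _ (@tau_fun n)).
by move=> [i u]; rewrite /tau_fun; congr pair; rewrite opprD opprK addrNK.
Qed.
Definition tau (n : nat) : {perm vert n} := perm (@tau_inj n).

Definition alpha_fun (n : nat) (i : 'Z_(2 ^ n)) (v : vert n) : vert n :=
  if v.1 == i then (v.1, ~~ v.2) else v.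
Lemma alpha_inj n i : injective (@alpha_fun n i).
Proof.
have K : cancel (@alpha_fun n i) (@alpha_fun n i).
  move=> [j u]; rewrite /alpha_fun /=.
by case: (eqVneq j i) => [->|ne] /=; rewrite ?eqxx ?negbK // (negbTE ne).
exact: can_inj K.
Qed.
Definition alpha (n : nat) (i : 'Z_(2 ^ n)) : {perm vert n} := perm (@alpha_inj n i).

(* Products of permutations are in MathComp's convention:
   (g * h) v = h (g v), i.e. g is applied first. *)
Definition x_elt (n : nat) : {perm vert n} := (@alpha n 1%R * @sigma n)%g.

(* z = product of all alpha_i with i not congruent to 1 mod 4
   (the alpha_i commute, so the order of the product is irrelevant). *)
Definition z_elt (n : nat) : {perm vert n} :=
  (\prod_(i : 'Z_(2 ^ n) | (val i %% 4 != 1)%N) @alpha n i)%g.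

Definition Ggrp (n : nat) : {group {perm vert n}} :=
  <<[set @x_elt n; @tau n; @z_elt n]>>%G.

(* Main.v *)
Require Import Defs.
From mathcomp Require Import all_boot all_order all_algebra all_fingroup.
From mathcomp Require Import ring zify.
Set Implicit Arguments. Unset Strict Implicit. Unset Printing Implicit Defensive.
Import GRing.Theory.
Section Arith.
Local Open Scope ring_scope.
Variable n : nat.
Hypothesis hn : (3 <= n)%N.
Local Notation N := (2 ^ n)%N.
Local Notation Z := ('Z_(2 ^ n)).

Lemma N_gt1 : (1 < N)%N.
Proof. by rewrite -{1}(expn0 2) ltn_exp2l //; lia. Qed.

Lemma NE : N = (2 ^ n.-1 + 2 ^ n.-1)%N.
Proof. by rewrite addnn -mul2n -expnS prednK //; lia. Qed.

Lemma H4 : (4 <= 2 ^ n.-1)%N.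
Proof. have : (2 ^ 2 <= 2 ^ n.-1)%N by rewrite leq_exp2l //; lia. by []. Qed.

Lemma valZ (x : Z) : (nat_of_ord x < N)%N.
Proof. apply: leq_trans (ltn_ord x) _; by rewrite Zp_cast // N_gt1. Qed.

Lemma valn (m : nat) : nat_of_ord (m%:R : Z) = (m %% N)%N.
Proof. exact: val_Zp_nat N_gt1 m. Qed.

Lemma Zval (x : Z) : x = (nat_of_ord x)%:R.
Proof. by rewrite natr_Zp. Qed.

Lemma valD (a b : Z) : nat_of_ord (a + b) = ((nat_of_ord a + nat_of_ord b) %% N)%N.
Proof. by rewrite {1}(Zval a) {1}(Zval b) -natrD valn. Qed.

Lemma valM (a b : Z) : nat_of_ord (a * b) = ((nat_of_ord a * nat_of_ord b) %% N)%N.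
Proof. by rewrite {1}(Zval a) {1}(Zval b) -natrM valn. Qed.

Lemma mod2N (y : nat) : (y < N + N)%N -> (y %% N = if y < N then y else y - N)%N.
Proof.
move=> hy; case: ltnP => h; first by rewrite modn_small.
by rewrite -{1}(subnK h) modnDr modn_small //; lia.
Qed.

Lemma Nchar : (N%:R : Z) = 0.
Proof. exact: pchar_Zp N_gt1. Qed.


Local Notation H := (2 ^ n.-1)%N.
Definition hh : Z := H%:R.
Definition q4 : Z := (2 ^ n.-2)%:R.
Definition top (p : Z) : bool := (H <= nat_of_ord p)%N.

Lemma valh : nat_of_ord hh = H.
Proof. rewrite /hh valn modn_small // NE; have := H4; lia. Qed.

Lemma h_neq0 : hh != 0.
Proof. apply/eqP => /(congr1 (@nat_of_ord _)); rewrite valh /=; have := H4; lia. Qed.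

Lemma hhD : hh + hh = 0.
Proof. by rewrite /hh -natrD -NE Nchar. Qed.

Lemma hN : - hh = hh.
Proof. by apply/eqP; rewrite eq_sym -subr_eq0 opprK hhD. Qed.

Lemma h2 : hh * 2 = 0.
Proof. by rewrite mulrDr mulr1 hhD. Qed.

Lemma h2' : 2 * hh = 0.
Proof. by rewrite mulrC h2. Qed.

Lemma h2x (x : Z) : hh * (2 * x) = 0.
Proof. by rewrite mulrA h2 mul0r. Qed.

Lemma hhh : hh * hh = 0.
Proof.
rewrite /hh -natrM -expnD.
have -> : (n.-1 + n.-1 = n + n.-2)%N by lia.
by rewrite expnD natrM Nchar mul0r.
Qed.

Lemma q2 : 2 * q4 = hh.
Proof.
rewrite /q4 /hh -[2 in LHS]/(2%:R) -natrM -expnS; congr _%:R; congr (2 ^ _)%N; lia.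
Qed.

Lemma hq : hh * q4 = 0.
Proof.
rewrite /hh /q4 -natrM -expnD.
have -> : (n.-1 + n.-2 = n + (n - 3))%N by lia.
by rewrite expnD natrM Nchar mul0r.
Qed.

Lemma decomp (x : Z) : x = 2 * ((nat_of_ord x)./2)%:R + (odd (nat_of_ord x))%:R.
Proof.
rewrite {1}(Zval x) -{1}(odd_double_half (nat_of_ord x)) natrD addrC -mul2n natrM.
by [].
Qed.

Lemma h_odd (b : bool) : hh * b%:R = if b then hh else 0.
Proof. by case: b; rewrite ?mulr1 ?mulr0. Qed.

Lemma top_addh (p : Z) : top (p + hh) = ~~ top p.
Proof.
have := valZ p; have := NE => E vp.
rewrite /top valD valh mod2N; last by lia.
case: ifP => h1; lia.
Qed.

Lemma val2 : nat_of_ord (2 : Z) = 2%N.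
Proof. rewrite valn modn_small //; have := NE; have := H4; lia. Qed.

Lemma two_eq0 (r : Z) : 2 * r = 0 -> r = 0 \/ r = hh.
Proof.
have := valZ r; have := NE; have := H4 => h4 E vr.
move=> /(congr1 (@nat_of_ord _)); rewrite valM val2 /=.
rewrite mod2N; last by lia.
case: ifP => h1 h2.
  left; apply: val_inj => /=; lia.
right; apply: val_inj => /=; rewrite valh; lia.
Qed.

Lemma two_eq0E (r : Z) : (2 * r == 0) = ((r == 0) || (r == hh)).
Proof.
apply/idP/idP => [/eqP/two_eq0 [] ->|/orP [] /eqP ->]; rewrite ?eqxx ?orbT //.
- by rewrite mulr0.
- by rewrite mulrC h2.
Qed.

Lemma eqZ (x y : Z) : (x == y) = (nat_of_ord x == nat_of_ord y).
Proof. by []. Qed.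

Lemma val1 : nat_of_ord (1 : Z) = 1%N.
Proof. rewrite -(mulr1n (1 : Z)) valn modn_small //; exact: N_gt1. Qed.

Lemma top_add1 (p : Z) : top (p + 1) = top p (+) ((p + 1 == 0) || (p + 1 == hh)).
Proof.
have := valZ p; have := NE; have := H4 => h4 E vp.
rewrite /top !eqZ valh valD val1.
have -> : nat_of_ord (0 : Z) = 0%N by [].
rewrite mod2N; last by lia.
case: ifP => h1; case: (ltnP H (nat_of_ord p)) => h2; rewrite ?addbT ?addbF /=; lia.
Qed.

Lemma top_opp (p : Z) : top (- p - 1) = ~~ top p.
Proof.
have vp := valZ p.
have E : 0 = (N.-1 - nat_of_ord p)%:R + p + 1 :> Z.
  rewrite -Nchar [X in _ + X + _](Zval p) -natrD -(natrD _ _ 1); congr _%:R; lia.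
have -> : - p - 1 = (N.-1 - nat_of_ord p)%:R :> Z.
  transitivity ((N.-1 - nat_of_ord p)%:R + p + 1 - p - 1 : Z); first by rewrite -E; ring.
  ring.
rewrite /top valn modn_small; last by lia.
have := NE; lia.
Qed.


Lemma two_neq0 : (2 : Z) != 0.
Proof. apply/eqP => e; move/eqP: h_neq0; apply; by rewrite -q2 e mul0r. Qed.

Lemma h3 : hh * 3 = hh.
Proof.
have -> : (3 : Z) = 2 + 1 by ring.
by rewrite mulrDr h2 add0r mulr1.
Qed.

Definition Dv (p : Z) : vert n := (2 * p + 3, top p).

Lemma Dv_inj : injective Dv.
Proof.
move=> p q E; have /addIr e : 2 * p + 3 = 2 * q + 3 := congr1 fst E.
have t : top p = top q := congr1 snd E.
have : 2 * (p - q) = 0 by rewrite mulrBr e subrr.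
case/two_eq0 => [/eqP|/eqP].
  by rewrite subr_eq0 => /eqP.
rewrite subr_eq => /eqP ep; move: t; rewrite ep addrC top_addh.
by case: (top q).
Qed.

Lemma even_odd (a b : Z) : 2 * a != 2 * b + 3.
Proof.
apply/eqP => /(congr1 (fun x => hh * x)); rewrite mulrDr !h2x h3 add0r => e.
by move/eqP: h_neq0; rewrite e.
Qed.

Lemma codeD (q : Z) (u : bool) : exists q', Dv q' = (2 * q + 3, u).
Proof.
case E: (top q == u); first by exists q; rewrite /Dv (eqP E).
exists (q + hh); rewrite /Dv top_addh mulrDr h2' addr0.
by move: E; case: (top q); case: u.
Qed.

Lemma codeP (v : vert n) : (exists p, Dv p = v) \/ (exists r, v.1 = 2 * r).
Proof.
case: v => i u /=; rewrite (decomp i); case: (odd _) => /=.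
  left; have [q' e] := codeD (((nat_of_ord i)./2)%:R - 1) u; exists q'; rewrite e.
  congr pair; ring.
by right; eexists; rewrite addr0.
Qed.

Lemma notD (v : vert n) (r : Z) : v.1 = 2 * r -> forall p, Dv p != v.
Proof.
case: v => i u /= -> p; apply/eqP => /(congr1 fst) /= e.
by move/eqP: (even_odd r p); rewrite e.
Qed.

Definition P := (bool * Z * bool)%type.
Definition sg (s : bool) : Z := if s then -1 else 1.
Definition bh (b : bool) : Z := if b then hh else 0.
Definition mu (b : bool) : Z := 1 + bh b.
Definition dd (s : bool) : Z := if s then - 3 else 0.

Definition aff (par : P) (p : Z) : Z :=
  sg par.1.1 * mu par.2 * p + par.1.2 + dd par.1.1.

Definition Mf (par : P) (v : vert n) : vert n :=
  if [pick p | Dv p == v] is Some p then Dv (aff par p)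
  else (sg par.1.1 * v.1 + 2 * par.1.2, v.2 (+) par.2).

Lemma MfD par p : Mf par (Dv p) = Dv (aff par p).
Proof.
rewrite /Mf; case: pickP => [q /eqP /Dv_inj -> //|/(_ p)].
by rewrite eqxx.
Qed.

Lemma MfE par (v : vert n) r : v.1 = 2 * r ->
  Mf par v = (sg par.1.1 * v.1 + 2 * par.1.2, v.2 (+) par.2).
Proof.
move=> e; rewrite /Mf; case: pickP => [q /eqP eq|//].
by move: (notD e q); rewrite eq eqxx.
Qed.

Lemma sgM s1 s2 : sg s1 * sg s2 = sg (s1 (+) s2).
Proof. by case: s1; case: s2; rewrite /= ?mulr1 ?mul1r ?mulrNN ?mulr1. Qed.

Lemma muM b1 b2 : mu b1 * mu b2 = mu (b1 (+) b2).
Proof.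
rewrite /mu /bh; case: b1; case: b2; rewrite /= ?addr0; [|ring|ring|ring].
transitivity (1 + (hh + hh) + hh * hh); first ring.
by rewrite hhD hhh !addr0.
Qed.

Lemma bh2 b : bh b * 2 = 0.
Proof. by case: b; rewrite /= ?h2 ?mul0r. Qed.

Lemma dd2 s1 s2 : 2 * (sg s2 * dd s1 + dd s2 - dd (s1 (+) s2)) = 0.
Proof. by case: s1; case: s2; rewrite /=; ring. Qed.

Lemma d3 s : 2 * dd s + 3 = 3 * sg s.
Proof. by case: s; rewrite /=; ring. Qed.

Definition comp (p1 p2 : P) : P :=
  (p1.1.1 (+) p2.1.1,
   sg p2.1.1 * mu p2.2 * (p1.1.2 + dd p1.1.1) + p2.1.2 + dd p2.1.1
     - dd (p1.1.1 (+) p2.1.1),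
   p1.2 (+) p2.2).

Lemma Mf_first par v : (Mf par v).1 = sg par.1.1 * v.1 + 2 * par.1.2.
Proof.
case: (codeP v) => [[p <-]|[r e]]; last by rewrite (MfE _ e).
rewrite MfD /Dv /aff /=.
case: par => [[s k] b] /=.
transitivity (sg s * (2 * p + 3) + 2 * k + (bh b * 2) * sg s * p
   + (2 * dd s + 3 - 3 * sg s)); first by rewrite /mu; ring.
by rewrite bh2 d3 subrr; ring.
Qed.

Lemma Mf_comp p1 p2 v : Mf p2 (Mf p1 v) = Mf (comp p1 p2) v.
Proof.
case: p1 => [[s1 k1] b1]; case: p2 => [[s2 k2] b2].
case: (codeP v) => [[p <-]|[r e]].
  rewrite !MfD; congr Dv; rewrite /aff /comp /= -sgM -muM; ring.
rewrite (MfE _ e) (@MfE _ _ (sg s1 * r + k1)); last by rewrite /= e; ring.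
rewrite (MfE _ e) /comp /=; congr pair; last by rewrite addbA.
rewrite e -sgM.
transitivity (sg s1 * sg s2 * (2 * r) + 2 * (sg s2 * mu b2 * (k1 + dd s1) + k2 + dd s2 -
    dd (s1 (+) s2)) - sg s2 * (bh b2 * 2) * (k1 + dd s1)
    - 2 * (sg s2 * dd s1 + dd s2 - dd (s1 (+) s2))); first by rewrite /mu; ring.
by rewrite bh2 dd2; ring.
Qed.

Definition idp : P := (false, 0, false).

Lemma Mf_id v : Mf idp v = v.
Proof.
case: (codeP v) => [[p <-]|[r e]].
  by rewrite MfD /aff /= /mu /bh /=; congr Dv; ring.
rewrite (MfE _ e) /=; case: v e => i u /= _; rewrite addbF; congr pair; ring.
Qed.

Definition invp (par : P) : P :=
  (par.1.1, - (sg par.1.1 * mu par.2 * (par.1.2 + dd par.1.1)) - dd par.1.1, par.2).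

Lemma Mf_can par : cancel (Mf par) (Mf (invp par)).
Proof.
move=> v; rewrite Mf_comp -[RHS]Mf_id; congr Mf.
case: par => [[s k] b]; rewrite /comp /idp /=; congr (_, _, _).
- by case: s.
- by rewrite (_ : s (+) s = false) /= ?subr0; [ring | case: s].
- by case: b.
Qed.

Definition Mp (par : P) : {perm vert n} := perm (can_inj (@Mf_can par)).

Lemma MpE par v : Mp par v = Mf par v.
Proof. by rewrite permE. Qed.

Lemma MpM p1 p2 : (Mp p1 * Mp p2)%g = Mp (comp p1 p2).
Proof. by apply/permP => v; rewrite permM !MpE Mf_comp. Qed.

Lemma Mp_id : Mp idp = 1%g.
Proof. by apply/permP => v; rewrite MpE perm1 Mf_id. Qed.


Lemma prod_alpha (r : seq Z) (Q : pred Z) (v : vert n) : uniq r ->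
  (\prod_(i <- r | Q i) @alpha n i)%g v =
    if (v.1 \in r) && Q v.1 then (v.1, ~~ v.2) else v.
Proof.
elim: r v => [|a r IH] v /=; first by rewrite big_nil perm1.
case/andP => anr ur; rewrite big_cons in_cons.
case: (eqVneq v.1 a) => [e|ne] /=.
  case: ifP => Qa.
    rewrite permM /alpha permE /alpha_fun e eqxx IH //= (negbTE anr) /=.
    by rewrite ifT.
  by rewrite IH // e (negbTE anr) /= ifF.
case: ifP => Qa; last by rewrite IH.
by rewrite permM /alpha permE /alpha_fun (negbTE ne) IH.
Qed.

Lemma zE (v : vert n) :
  z_elt n v = if (nat_of_ord v.1 %% 4 != 1)%N then (v.1, ~~ v.2) else v.
Proof. by rewrite /z_elt prod_alpha ?index_enum_uniq // mem_index_enum. Qed.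

Lemma m4 (x : nat) : (x %% N %% 4 = x %% 4)%N.
Proof.
apply: modn_dvdm; rewrite (_ : 4 = 2 ^ 2)%N // dvdn_exp2l //; lia.
Qed.

Lemma val3 : nat_of_ord (3 : Z) = 3%N.
Proof. rewrite valn modn_small //; have := NE; have := H4; lia. Qed.

Lemma mod4_odd (p : Z) : (nat_of_ord (2 * p + 3)%R %% 4 != 1)%N = ~~ odd (nat_of_ord p).
Proof.
rewrite valD valM val2 val3 m4 -modnDm m4 modnDm.
rewrite -{1}(odd_double_half (nat_of_ord p)); case: (odd _) => /=; lia.
Qed.

Lemma mod4_even (r : Z) : (nat_of_ord (2 * r)%R %% 4 != 1)%N.
Proof. rewrite valM val2 m4; lia. Qed.

Lemma one_odd : (1 : Z) = 2 * (-1) + 3.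
Proof. ring. Qed.

Lemma xE : x_elt n = Mp (false, 1, false).
Proof.
apply/permP => v; rewrite MpE permM /sigma /alpha !permE /sigma_fun /alpha_fun.
case: (codeP v) => [[p <-]|[r e]].
  rewrite MfD /Dv /aff /= /mu /bh /=.
  have E1 : (2 * p + 3 == 1) = ((p + 1 == 0) || (p + 1 == hh)).
    rewrite -two_eq0E -subr_eq0; apply/eqP/eqP => h; rewrite -h; ring.
  rewrite (_ : 1 * (1 + 0) * p + 1 + 0 = p + 1); last by ring.
  rewrite top_add1 -E1; case: ifP => _ /=; congr pair; rewrite ?addbT ?addbF //; ring.
rewrite (MfE _ e).
have -> : (v.1 == 1) = false.
  by apply/negbTE; rewrite e; have := even_odd r (-1); rewrite -one_odd.
by case: v e => i u /= _; rewrite addbF; congr pair; ring.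
Qed.

Lemma tauE : tau n = Mp (true, 2 + hh, false).
Proof.
apply/permP => v; rewrite MpE /tau permE /tau_fun.
case: (codeP v) => [[p <-]|[r e]].
  rewrite MfD /Dv /aff /= /mu /bh /=.
  rewrite (_ : -1 * (1 + 0) * p + (2 + hh) + - 3 = (- p - 1) + hh); last by ring.
  rewrite top_addh top_opp negbK; congr pair.
  transitivity (- (2 * p + 3) + 4%:R + 2 * hh); last by ring.
  by rewrite h2' addr0.
rewrite (MfE _ e) /= addbF; congr pair.
transitivity (- v.1 + 4%:R + 2 * hh); last by ring.
by rewrite h2' addr0.
Qed.

Lemma zE' : z_elt n = Mp (false, hh, true).
Proof.
apply/permP => v; rewrite MpE zE.
case: (codeP v) => [[p <-]|[r e]].
  rewrite MfD /Dv /aff /= mod4_odd /mu /bh /=.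
  have ep : hh * p = hh * (odd (nat_of_ord p))%:R.
    by rewrite {1}(decomp p) mulrDr h2x add0r.
  rewrite (_ : 1 * (1 + hh) * p + hh + 0 = p + hh * p + hh); last by ring.
  rewrite ep; case: (odd _) => /=.
    by rewrite mulr1 -addrA hhD addr0.
  by rewrite mulr0 addr0 top_addh mulrDr h2' addr0.
rewrite (MfE _ e) /= e mod4_even /=; congr pair; last by rewrite addbT.
by rewrite h2' addr0 mul1r.
Qed.

Definition Mset : {set {perm vert n}} := [set Mp par | par : P].

Lemma Mset_gs : group_set Mset.
Proof.
apply/group_setP; split.
  by apply/imsetP; exists idp => //; rewrite Mp_id.
move=> g h /imsetP[p1 _ ->] /imsetP[p2 _ ->]; rewrite MpM.
by apply/imsetP; exists (comp p1 p2).
Qed.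

Canonical MG := Group Mset_gs.

Lemma G_sub : Ggrp n \subset Mset.
Proof.
rewrite /Ggrp /= -[Mset]/(gval MG) gen_subG; apply/subsetP => g.
rewrite !inE; case/orP => [/orP[]|] /eqP ->; apply/imsetP.
- by exists (false, 1, false) => //; rewrite xE.
- by exists (true, 2 + hh, false) => //; rewrite tauE.
- by exists (false, hh, true) => //; rewrite zE'.
Qed.

Lemma Mp_in par : Mp par \in Ggrp n.
Proof.
have hx : x_elt n \in Ggrp n by rewrite mem_gen // !inE eqxx.
have ht : tau n \in Ggrp n by rewrite mem_gen // !inE eqxx ?orbT.
have hz : z_elt n \in Ggrp n by rewrite mem_gen // !inE eqxx ?orbT.
have k0 : forall j : nat, Mp (false, j%:R, false) = (x_elt n ^+ j)%g.
  elim=> [|j IH]; first by rewrite expg0 -Mp_id.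
  rewrite expgSr -IH xE MpM /comp /= /mu /bh /=; congr Mp; congr (_, _, _).
  rewrite mulrS; ring.
have k1 : forall k, Mp (false, k, false) \in Ggrp n.
  by move=> k; rewrite (Zval k) k0 groupX.
have k2 : forall s k, Mp (s, k, false) \in Ggrp n.
  case=> k //.
  have -> : Mp (true, k, false) = (Mp (false, - k + 2 + hh, false) * tau n)%g.
    rewrite tauE MpM /comp /= /mu /bh /=; congr Mp; congr (_, _, _); ring.
  by rewrite groupM.
case: par => [[s k] b]; case: b => //.
have -> : Mp (s, k, true) = (Mp (s, (1 + hh) * (k - hh + dd s) - dd s, false) * z_elt n)%g.
  rewrite zE' MpM /comp /= /mu /bh /=; congr Mp; congr (_, _, _).
  - by rewrite addbF.
  have e : (1 + hh) * (1 + hh) = 1 by have := muM true true; rewrite /mu /bh /= addr0.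
  rewrite addbF.
  transitivity ((1 + hh) * (1 + hh) * (k - hh + dd s) + hh - dd s); first by rewrite e; ring.
  ring.
by rewrite groupM.
Qed.

Lemma G_eq : Ggrp n = Mset :> {set _}.
Proof.
apply/eqP; rewrite eqEsubset G_sub /=; apply/subsetP => g /imsetP[par _ ->].
exact: Mp_in.
Qed.

Lemma par_eq (p1 p2 : P) :
  sg p1.1.1 * 2 + 2 * p1.1.2 = sg p2.1.1 * 2 + 2 * p2.1.2 -> p1.2 = p2.2 ->
  p1.1.2 + dd p1.1.1 = p2.1.2 + dd p2.1.1 -> p1 = p2.
Proof.
case: p1 => [[s1 k1] b1]; case: p2 => [[s2 k2] b2] /= e1 -> e2.
case: s1 e1 e2; case: s2 => /= e1 e2.
- by move/addIr: e2 => ->.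
- have : (2 : Z) = 0.
    transitivity ((-1 * 2 + 2 * k1) - (1 * 2 + 2 * k2) - 2 * ((k1 + -3) - (k2 + 0))).
      ring.
    by rewrite e1 e2 !subrr mulr0 subr0.
  by move/eqP; rewrite (negbTE two_neq0).
- have : (2 : Z) = 0.
    transitivity (2 * ((k1 + 0) - (k2 + -3)) - ((1 * 2 + 2 * k1) - (-1 * 2 + 2 * k2))).
      ring.
    by rewrite e1 e2 !subrr mulr0 subr0.
  by move/eqP; rewrite (negbTE two_neq0).
- by move/addIr: e2 => ->.
Qed.

Lemma two1 : ((2 : Z), false).1 = 2 * 1.
Proof. by rewrite mulr1. Qed.

Lemma aff0 par : aff par 0 = par.1.2 + dd par.1.1.
Proof. by rewrite /aff mulr0 add0r. Qed.

Lemma Mp_inj : injective Mp.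
Proof.
move=> p1 p2 e.
have e1 := congr1 (fun g : {perm vert n} => g ((2 : Z), false)) e.
have e2 := congr1 (fun g : {perm vert n} => g (Dv 0)) e.
move: e1 e2; rewrite /= !MpE !(MfE _ two1) !MfD => e1 /Dv_inj; rewrite !aff0.
apply: par_eq; first exact: (congr1 fst e1).
by have /= := congr1 snd e1.
Qed.


Definition e0 : {set vert n} := [set ((2 : Z), false); Dv 0].

Lemma EimgE par : Mp par @: e0 =
  [set (sg par.1.1 * 2 + 2 * par.1.2, par.2); Dv (par.1.2 + dd par.1.1)].
Proof. by rewrite imsetU1 imset_set1 !MpE (MfE _ two1) MfD aff0. Qed.

Lemma Eimg_edge par : Mp par @: e0 \in edges n.
Proof.
case: par => [[s k] b]; rewrite EimgE inE; apply/existsP; exists (sg s * 2 + 2 * k, b).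
apply/existsP; exists (Dv (k + dd s)); rewrite eqxx andbT.
rewrite /adj /Dv /=; case: s => /=.
  by apply/orP; left; apply/eqP; ring.
by apply/orP; right; apply/eqP; ring.
Qed.

Lemma e0_edge : e0 \in edges n.
Proof.
rewrite inE; apply/existsP; exists ((2 : Z), false); apply/existsP; exists (Dv 0).
rewrite eqxx andbT /adj /=; apply/orP; right; apply/eqP; ring.
Qed.

Lemma edge_hit (a b : vert n) : a.1 - b.1 = 1 -> exists par, Mp par @: e0 = [set a; b].
Proof.
move=> hab; have ea : a.1 = b.1 + 1 by rewrite -hab; ring.
case: (codeP b) => [[q eb]|[r e]].
  exists (true, q + 3, a.2); rewrite EimgE /=.
  rewrite (_ : q + 3 + - 3 = q); last by ring.
  rewrite eb; congr [set _; _]; case: a ea hab => i u /= -> _; rewrite -eb /=; congr pair; ring.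
have [q' eq'] := codeD (r - 1) a.2.
have ha : Dv q' = a.
  by case: a ea hab eq' => i u /= ea _ ->; rewrite ea e; congr pair; ring.
exists (false, q', b.2); rewrite EimgE /= addr0 ha setUC; congr [set _; _].
rewrite [in RHS](surjective_pairing b); congr pair.
have h : a.1 = 2 * q' + 3 by rewrite -ha.
transitivity (a.1 - 1); first by rewrite h; ring.
by rewrite ea; ring.
Qed.

Lemma edges_img e : e \in edges n -> exists par, Mp par @: e0 = e.
Proof.
rewrite inE => /existsP[a /existsP[b /andP[hab /eqP ->]]].
case/orP: hab => /eqP h; first exact: edge_hit.
by have [par hp] := edge_hit h; exists par; rewrite hp setUC.
Qed.

Lemma Eimg_inj : injective (fun par => Mp par @: e0).
Proof.
move=> p1 p2 /=; rewrite !EimgE => E.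
have nD1 : forall p, Dv p != (sg p1.1.1 * 2 + 2 * p1.1.2, p1.2).
  by apply: notD (sg p1.1.1 + p1.1.2) _; rewrite /=; ring.
have nD2 : forall p, Dv p != (sg p2.1.1 * 2 + 2 * p2.1.2, p2.2).
  by apply: notD (sg p2.1.1 + p2.1.2) _; rewrite /=; ring.
have hO : Dv (p1.1.2 + dd p1.1.1) \in
   [set (sg p2.1.1 * 2 + 2 * p2.1.2, p2.2); Dv (p2.1.2 + dd p2.1.1)].
  by rewrite -E !inE eqxx orbT.
have hA : (sg p1.1.1 * 2 + 2 * p1.1.2, p1.2) \in
   [set (sg p2.1.1 * 2 + 2 * p2.1.2, p2.2); Dv (p2.1.2 + dd p2.1.1)].
  by rewrite -E !inE eqxx.
rewrite !inE in hO hA.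
case/orP: hO => /eqP hO; first by move: (nD2 (p1.1.2 + dd p1.1.1)); rewrite hO eqxx.
case/orP: hA => /eqP hA; last by move: (nD1 (p2.1.2 + dd p2.1.1)); rewrite -hA eqxx.
apply: par_eq; first exact: (congr1 fst hA).
  exact: (congr1 snd hA).
exact: Dv_inj hO.
Qed.

Lemma Mp_aut par : is_aut (Mp par).
Proof.
move=> a b; rewrite /adj !MpE !Mf_first; case: par => [[s k] b0] /=; case: s => /=.
  rewrite (_ : -1 * a.1 + 2 * k - (-1 * b.1 + 2 * k) = b.1 - a.1); last by ring.
  rewrite (_ : -1 * b.1 + 2 * k - (-1 * a.1 + 2 * k) = a.1 - b.1); last by ring.
  by rewrite orbC.
rewrite (_ : 1 * a.1 + 2 * k - (1 * b.1 + 2 * k) = a.1 - b.1); last by ring.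
by rewrite (_ : 1 * b.1 + 2 * k - (1 * a.1 + 2 * k) = b.1 - a.1); last by ring.
Qed.

Lemma orbit_e0 : orbit 'P^* (Ggrp n) e0 = edges n.
Proof.
apply/setP => e; apply/imsetP/idP.
  case=> g; rewrite G_eq => /imsetP[par _ ->] ->; exact: Eimg_edge.
case/edges_img => par <-; exists (Mp par) => //; exact: Mp_in.
Qed.

Lemma edges_eq : edges n = [set Mp par @: e0 | par : P].
Proof.
apply/setP => e; apply/idP/imsetP.
  by case/edges_img => par <-; exists par.
by case=> par _ ->; exact: Eimg_edge.
Qed.

Lemma cardP : #|{: P}| = (2 ^ (n + 2))%N.
Proof.
rewrite !card_prod card_bool card_ord Zp_cast ?N_gt1 // expnD.
by rewrite (_ : 2 ^ 2 = 4)%N //; lia.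
Qed.

Lemma card_edges : #|edges n| = (2 ^ (n + 2))%N.
Proof. by rewrite edges_eq (card_imset _ Eimg_inj) cardP. Qed.

Lemma card_G : #|Ggrp n| = (2 ^ (n + 2))%N.
Proof. by rewrite G_eq (card_imset _ Mp_inj) cardP. Qed.

Lemma decomp' (x : Z) : exists (w : Z) (b : bool), x = 2 * w + b%:R.
Proof. by exists ((nat_of_ord x)./2)%:R, (odd (nat_of_ord x)); exact: decomp. Qed.

Lemma invol g : g \in Ggrp n -> #[g]%g = 2%N -> exists v : vert n, g v = v.
Proof.
rewrite G_eq => /imsetP[par _ ->] ord2.
have sq : (Mp par * Mp par)%g = 1%g.
  by have := expg_order (Mp par); rewrite ord2 expgS expg1.
have ne : par != idp.
  by apply/eqP => e; move: ord2; rewrite e Mp_id order1.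
rewrite MpM -Mp_id in sq; move/Mp_inj: sq => sq.
have sqk := congr1 (fun p : P => p.1.2) sq; rewrite /comp /idp /= in sqk.
clear ord2 sq; case: par ne sqk => [[s k] b]; case: s; case: b => ne sqk; rewrite /= /mu /bh /= in sqk.
-
  have hk : hh * (k - 3) = 0.
    transitivity (- (-1 * (1 + hh) * (k + - 3) + k + - 3 - 0)); first ring.
    by rewrite sqk oppr0.
  have [w [[] ew]] := decomp' (k - 3).
    by move: hk; rewrite ew mulrDr h2x add0r mulr1 => h; move/eqP: h_neq0; rewrite h.
  have [t [[] et]] := decomp' w.
    have hw : hh * w = hh by rewrite et mulrDr h2x add0r mulr1.
    exists (Dv (w + q4)); rewrite MpE MfD; congr Dv; rewrite /aff /= /mu /bh /=.
    transitivity ((w + q4) - (2 * q4) - hh * w - hh * q4 + ((k - 3) - 2 * w)); first ring.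
    rewrite ew addr0 subrr addr0 q2 hq hw subr0.
    transitivity (w + q4 - (hh + hh)); first ring.
    by rewrite hhD subr0.
  have hw : hh * w = 0 by rewrite et mulrDr h2x add0r mulr0.
  exists (Dv w); rewrite MpE MfD; congr Dv; rewrite /aff /= /mu /bh /=.
  transitivity (w - hh * w + ((k - 3) - 2 * w)); first ring.
  by rewrite ew addr0 subrr hw !subr0 addr0.
-
  have [w [[] ew]] := decomp' k.
    exists (Dv (w - 1)); rewrite MpE MfD; congr Dv; rewrite /aff /= /mu /bh /= ew /=; ring.
  exists (k, false); rewrite MpE (@MfE _ _ w); last by rewrite /= ew addr0.
  by rewrite /=; congr pair; ring.
-
  have [w [[] ew]] := decomp' k.
    have : q4 * (1 * (1 + hh) * (k + 0) + k + 0 - 0) = hh.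
      rewrite ew /=.
      transitivity ((2 * q4) * (2 * w) + 2 * q4 + (2 * q4) * hh * w + hh * q4); first ring.
      by rewrite q2 h2x hhh hq mul0r add0r !addr0.
    by rewrite sqk mulr0 => h; move/eqP: h_neq0; rewrite h.
  have : 2 * k = 0.
    transitivity (1 * (1 + hh) * (k + 0) + k + 0 - 0 - hh * k); first ring.
    by rewrite sqk ew addr0 h2x subr0.
  case/two_eq0 => ek.
    by exists (Dv 0); rewrite MpE MfD; congr Dv; rewrite /aff /= /mu /bh /= ek; ring.
  exists (Dv 1); rewrite MpE MfD; congr Dv; rewrite /aff /= /mu /bh /= ek.
  transitivity (1 + (hh + hh)); first ring.
  by rewrite hhD addr0.
-
  have : 2 * k = 0.
    transitivity (1 * (1 + 0) * (k + 0) + k + 0 - 0); first ring.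
    exact: sqk.
  case/two_eq0 => ek; first by move: ne; rewrite ek eqxx.
  exists (0, false); rewrite MpE (@MfE _ _ 0); last by rewrite /= mulr0.
  by rewrite /= ek h2' addr0 mulr0.
Qed.

End Arith.

Theorem lemma4p1 (n : nat) (hn : 3 <= n) :
  [/\ (forall g, g \in Ggrp n -> is_aut g),
      #|Ggrp n| = 2 ^ (n + 2),
      [transitive Ggrp n, on edges n | 'P^*],
      (forall e, e \in edges n -> ('C_(Ggrp n)[e | 'P^*])%g = 1%g)
    & (forall g, g \in Ggrp n -> #[g]%g = 2 -> exists v : vert n, g v = v)].
Proof.
have tr : [transitive Ggrp n, on edges n | 'P^*].
  apply/imsetP; exists (e0 n); first exact: e0_edge.
  by rewrite orbit_e0.
split => //.
- move=> g; rewrite (G_eq hn) => /imsetP[par _ ->]; exact: Mp_aut.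
- exact: card_G.
- move=> e He; have orb : orbit 'P^* (Ggrp n) e = edges n by apply: atransP tr e He.
  have := card_orbit_stab 'P^* (Ggrp n) e; rewrite orb (card_edges hn) (card_G hn) => h.
  apply: card_le1_trivg; move/eqP: h.
  rewrite -{2}(muln1 (2 ^ (n + 2))) eqn_mul2l expn_eq0 /= => /eqP ->.
  by [].
- exact: invol.
Qed.
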